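(* Let $V,W$ be subsets of normed spaces over $\mathbb{R}$ or $\mathbb{C}$, $T:V\to W$, let $\emptyset\neq C\subseteq T(V)$ be a Chebyshev set in $W$, and $P_C:W\to W$ the projection onto $C$. For $w\in W$ let $B_w=\arg\min\{\|v\|:v\in V,\ P_C(T(v))=P_C(w)\}$ and let $W'$ be the set of $w\in W$ for which this minimum is attained. (1) If $w\in W'\setminus C$ then $P_C(w)\in W'\cap C$; and any operator $S:W'\to V$ with $S(w)\in B_w$ for $w\in W'\cap C$ and $S(w)=S(P_C(w))$ for $w\in W'\setminus C$ is a pseudo-inverse of $P_C\circ T$ on $W'$. (2) If in addition $T$ is continuous, $W$ is a Hilbert space, and every closed ball in $V$ is compact, then $W'=W$.
   Context: A nonempty subset $C$ of a metric space $W$ is a Chebyshev set if every $w\in W$ has exactly one nearest point in $C$; $P_C(w)$ is that point. For subsets $V,W$ of normed spaces, $T':V\to W$ and $E\subseteq W$, an operator $S:E\to V$ is a pseudo-inverse of $T'$ on $E$ if: (BAS) for every $w\in E$, the minimum $m_w=\min_{v\in V}\|T'(v)-w\|$ is attained, the norm attains its minimum on $\{v\in V:\|T'(v)-w\|=m_w\}$, and $S(w)\in\arg\min\{\|v\|:v\in V,\ \|T'(v)-w\|=m_w\}$; and (MP2) $S(T'(S(w)))=S(w)$ for all $w\in E$. *)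

(* Defs.v *)
From HB Require Import structures.
From mathcomp Require Import all_boot all_order all_algebra.
From mathcomp Require Import all_classical all_reals all_analysis.
Set Implicit Arguments. Unset Strict Implicit. Unset Printing Implicit Defensive.
Import Order.TTheory GRing.Theory Num.Theory.
Import numFieldNormedType.Exports.
Local Open Scope classical_set_scope.
Local Open Scope ring_scope.

Section Defs.
Variable K : numFieldType.

Definition nearest_point (F : normedModType K) (C : set F) (w c : F) : Prop :=
  C c /\ forall c', C c' -> `|w - c| <= `|w - c'|.

Definition chebyshev_set (F : normedModType K) (W C : set F) : Prop :=
  C !=set0 /\ C `<=` W /\ forall w, W w -> exists! c, nearest_point C w c.

Definition argmin_norm (E : normedModType K) (A : set E) : set E :=
  [set v | A v /\ forall v', A v' -> `|v| <= `|v'|].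

Definition is_pseudo_inverse (E F : normedModType K) (V : set E) (T' : E -> F)
    (Ed : set F) (S : F -> E) : Prop :=
  forall w, Ed w ->
    (exists m : K,
       (exists2 v, V v & `|T' v - w| = m) /\
       (forall v, V v -> m <= `|T' v - w|) /\
       argmin_norm [set v | V v /\ `|T' v - w| = m] (S w)) /\
    (* MP2 (with the implicit requirement that T'(S w) lies in Ed) *)
    Ed (T' (S w)) /\ S (T' (S w)) = S w.

(* W (a subset of the normed space F) is a Hilbert space: a linear subspace,
   complete, whose norm is induced by an inner product which is linear in the
   first argument and Hermitian w.r.t. an involutive field automorphism cj of K
   (cj = id over R, complex conjugation over C). *)
Definition hilbert_subspace (F : normedModType K) (W : set F) : Prop :=
  [/\ W 0, (forall x y, W x -> W y -> W (x + y)),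
      (forall (a : K) x, W x -> W (a *: x)),
      (forall u : nat -> F, (forall n, W (u n)) -> cauchy (u @ \oo) ->
          exists2 l, W l & u @ \oo --> l) &
      exists (cj : {rmorphism K -> K}) (ip : F -> F -> K),
        [/\ involutive cj,
            (forall a x y z, W x -> W y -> W z ->
               ip (a *: x + y) z = a * ip x z + ip y z),
            (forall x y, W x -> W y -> ip y x = cj (ip x y)) &
            (forall x, W x -> ip x x = `|x| ^+ 2)]].

End Defs.

(* Main.v *)
Require Import Defs.
From HB Require Import structures.
From mathcomp Require Import all_boot all_order all_algebra.
From mathcomp Require Import all_classical all_reals all_analysis.
Import Order.TTheory GRing.Theory Num.Theory.
Import numFieldNormedType.Exports.
Local Open Scope classical_set_scope.
Local Open Scope ring_scope.

Theorem mainTheorem11 (K : numFieldType) (E F : normedModType K)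
    (Vs : set E) (Ws : set F) (Top : E -> F) (C : set F) (PC : F -> F) :
  (forall v, Vs v -> Ws (Top v)) ->
  chebyshev_set Ws C ->
  C `<=` Top @` Vs ->
  (forall w, Ws w -> nearest_point C w (PC w)) ->
  let B := fun w => argmin_norm [set v | Vs v /\ PC (Top v) = PC w] in
  let Ws' := [set w | Ws w /\ B w !=set0] in
  ((forall w, Ws' w -> ~ C w -> Ws' (PC w) /\ C (PC w)) /\
   (forall S : F -> E,
      (forall w, Ws' w -> C w -> B w (S w)) ->
      (forall w, Ws' w -> ~ C w -> S w = S (PC w)) ->
      is_pseudo_inverse Vs (PC \o Top) Ws' S)) /\
  ({within Vs, continuous Top} ->
   hilbert_subspace Ws ->
   (forall v0 (r : K), Vs v0 -> compact [set v | Vs v /\ `|v - v0| <= r]) ->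
   Ws' = Ws).
Proof.
move=> HTW [Cne [CW Hch]] CT HPC B Ws'.
have uniqN : forall w x y, Ws w -> nearest_point C w x -> nearest_point C w y -> x = y.
  move=> w x y /Hch [c0 [_ Hc0]] Hx Hy.
  by rewrite -(Hc0 _ Hx) (Hc0 _ Hy).
have PCc : forall c, C c -> PC c = c.
  move=> c Cc; apply: (uniqN c); [exact: CW|exact: HPC (CW _ Cc)|].
  split=> // c' _; rewrite subrr normr0; exact: normr_ge0.
have PCin : forall w, Ws w -> C (PC w) by move=> w /HPC [].
have BPC : forall w, Ws w -> B (PC w) = B w.
  by move=> w Ww; rewrite /B PCc //; exact: PCin.
split.
  have part1 : forall w, Ws' w -> ~ C w -> Ws' (PC w) /\ C (PC w).
    move=> w [Ww Bw] _; split; last exact: PCin.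
    split; first exact/CW/PCin.
    by rewrite BPC.
  split=> // S HSC HSN w [Ww Bw].
  have SB : B w (S w).
    have [Cw|NCw] := pselect (C w); first exact: HSC.
    rewrite HSN //; have [H1 H2] := part1 w (conj Ww Bw) NCw.
    by rewrite -(BPC w Ww); apply: HSC.
  have Heq : [set v | Vs v /\ `|(PC \o Top) v - w| = `|PC w - w| ] =
             [set v | Vs v /\ PC (Top v) = PC w].
    rewrite eqEsubset; split=> v [Vv Hv]; split=> //=; last by rewrite Hv.
    apply: (uniqN w); [exact: Ww| |exact: HPC].
    split; first exact: PCin (HTW _ Vv).
    move=> c' Cc'; rewrite distrC /= in Hv; rewrite Hv distrC.
    by have [_ ->] := HPC w Ww.
  split.
    exists `|PC w - w|; split.
      have [v0 Vv0 Tv0] := CT _ (PCin _ Ww).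
      by exists v0 => //=; rewrite Tv0 PCc //; exact: PCin.
    split; first by move=> v Vv /=; rewrite distrC [X in _ <= X]distrC;
      have [_ ->] := HPC w Ww => //; exact: PCin (HTW _ Vv).
    by rewrite Heq.
  have [[VS PS] _] := SB.
  have Bc : Ws' (PC w) by split; [exact/CW/PCin | rewrite BPC].
  rewrite /= PS; split=> //.
  have [Cw|NCw] := pselect (C w); first by rewrite PCc.
  by rewrite (HSN w (conj Ww Bw) NCw).
move=> Hcont _ Hcomp.
rewrite eqEsubset; split; first by move=> w [].
move=> w Ww; split=> //.
set c := PC w.
have Cc : C c by exact: PCin.
have [v0 Vv0 Tv0] := CT _ Cc.
set r := `|v0| + `|v0|.
pose P v := [/\ Vs v, `|v - v0| <= r & forall c', C c' -> `|Top v - c| <= `|Top v - c'|].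
have PE : forall v, Vs v -> (forall c', C c' -> `|Top v - c| <= `|Top v - c'|) <-> PC (Top v) = c.
  move=> v Vv; split=> [H|<-]; last by have [] := HPC _ (HTW _ Vv).
  by apply: (uniqN (Top v)); [exact: HTW Vv|exact: HPC (HTW _ Vv)|split].
have Pv0 : P v0.
  split=> //; first by rewrite subrr normr0 addr_ge0.
  by apply/PE => //; rewrite Tv0 PCc.
pose G (a : E) := [set v | P v /\ `|v| <= `|a|].
have FF : Filter (filter_from P G).
  apply: filter_from_filter; first by exists v0.
  move=> i j Pi Pj.
  have /orP[hij|hji] := real_leVge (normr_real i) (normr_real j).
    exists i => // x [Px Hx]; split; split=> //; exact: le_trans hij.
  exists j => // x [Px Hx]; split; split=> //; exact: le_trans hji.
have PF : ProperFilter (filter_from P G).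
  apply: filter_from_proper => i Pi; exists i; split=> //.
have FK : filter_from P G [set v | Vs v /\ `|v - v0| <= r].
  by exists v0 => // x [[Vx Hx _] _].
have [vs [[Vvs Hvs] clvs]] := Hcomp v0 r Vv0 _ PF FK.
have minvs : forall a, P a -> `|vs| <= `|a|.
  move=> a Pa; rewrite real_leNgt ?normr_real //; apply/negP => Hlt.
  have e0 : 0 < `|vs| - `|a| by rewrite subr_gt0.
  have [v [[Pv Hv] Hb]] := clvs _ _ (ex_intro2 _ _ a Pa (@subset_refl _ (G a))) (nbhsx_ballx vs _ e0).
  move: Hb; rewrite -ball_normE /ball_ /= => Hb.
  have : `|vs| < `|vs| - `|a| + `|a|.
    have := ler_normD (vs - v) v; rewrite subrK => hh; apply: le_lt_trans hh _; exact: ltr_leD.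
  by rewrite subrK ltxx.
have condvs : forall c', C c' -> `|Top vs - c| <= `|Top vs - c'|.
  move=> c' Cc'; rewrite real_leNgt ?normr_real //; apply/negP => Hlt.
  set d := `|Top vs - c| - `|Top vs - c'|.
  have d0 : 0 < d / 2%:R by rewrite divr_gt0 // subr_gt0.
  have Hn := Hcont vs _ (nbhsx_ballx (Top vs) _ d0).
  have {}Hn : within Vs (nbhs vs) (Top @^-1` ball (Top vs) (d / 2%:R)).
    by rewrite nbhs_subspace_in //; exact: Hn.
  have [v [[Pv _] Hb]] := clvs _ _ (ex_intro2 _ _ v0 Pv0 (@subset_refl _ (G v0))) Hn.
  case: Pv => Vv _ Hv.
  move: (Hb Vv); rewrite -ball_normE /ball_ /= => {}Hb.
  have : `|Top vs - c| < `|Top vs - c|.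
    apply: (le_lt_trans (ler_distD (Top v) _ _)).
    apply: (@le_lt_trans _ _ (`|Top vs - Top v| + (`|Top v - Top vs| + `|Top vs - c'|))).
      apply: lerD => //; apply: le_trans (Hv _ Cc') _; exact: ler_distD.
    rewrite addrA [X in _ < X](_ : _ = d + `|Top vs - c'|); last by rewrite subrK.
    apply: ltr_leD => //; rewrite [d]splitr; apply: ltrD => //; by rewrite distrC.
  by rewrite ltxx.
have Pvs : P vs by split.
exists vs; split; first by split=> //; apply/PE.
move=> v' [Vv' Hv'].
have [h|h] := boolP (`|v' - v0| <= r).
  by apply: minvs; split=> //; apply/PE.
apply: le_trans (minvs _ Pv0) _.
move: h; rewrite -real_ltNge ?realD ?normr_real // => h.
have := lt_le_trans h (ler_distD 0 v' v0).
rewrite sub0r normrN distrC sub0r normrN => h2.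
rewrite ltW //; by rewrite ltrD2r in h2.
Qed.
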